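(* Let $f\in\mathbf{SB}_n$ with $\deg(f)>1$ and $\deg(f)$ not a power of $2$. Then $\mathcal{FAI}(f)\le \deg(f)-1$.
   Context: $\mathbf{SB}_n$ is the set of symmetric Boolean functions on $n$ variables; $\deg$ is the algebraic degree. The algebraic immunity of $f\in\mathbf{B}_n$ is $\mathcal{AI}(f)=\min\{\deg(g): g\neq0,\ gf=0 \text{ or } g(f+1)=0\}$. The fast algebraic immunity is $\mathcal{FAI}(f)=\min\big(\{2\mathcal{AI}(f)\}\cup\{\deg(g)+\deg(gf): g\in\mathbf{B}_n,\ 1\le\deg(g)<\mathcal{AI}(f)\}\big)$. *)

(* Defs.v *)
From mathcomp Require Import all_boot.
Set Implicit Arguments. Unset Strict Implicit. Unset Printing Implicit Defensive.

Definition point (n : nat) := {ffun 'I_n -> bool}.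
Definition BF (n : nat) := {ffun point n -> bool}.

Definition wt n (x : point n) : nat := #|[set i | x i]|.

Definition covered n (x u : point n) : bool := [forall i, x i ==> u i].

(* ANF (Moebius transform) coefficient of the monomial x^u. *)
Definition anf n (f : BF n) (u : point n) : bool :=
  \big[addb/false]_(x : point n | covered x u) f x.

(* Algebraic degree: max weight of a monomial with nonzero ANF coefficient
   (deg 0 = 0 by convention). *)
Definition deg n (f : BF n) : nat := \max_(u : point n | anf f u) wt u.

Definition bmul n (g f : BF n) : BF n := [ffun x => g x && f x].
Definition bcompl n (f : BF n) : BF n := [ffun x => ~~ f x].
Definition bzero n : BF n := [ffun => false].

Definition symmetricBF n (f : BF n) : Prop :=
  forall x y : point n, wt x = wt y -> f x = f y.

(* Algebraic immunity (the defining set is always nonempty since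
   f * (f+1) = 0 and one of f, f+1 is nonzero; the default n is irrelevant). *)
Definition AI n (f : BF n) : nat :=
  \big[minn/n]_(g : BF n | (g != bzero n) &&
        ((bmul g f == bzero n) || (bmul g (bcompl f) == bzero n))) deg g.

Definition FAI n (f : BF n) : nat :=
  minn (2 * AI f)
       (\big[minn/(2 * AI f)]_(g : BF n | (1 <= deg g) && (deg g < AI f))
          (deg g + deg (bmul g f))).

(* Main.v *)
From Stdlib Require Import FunctionalExtensionality.
Require Import Defs.
From mathcomp Require Import all_boot.
Set Implicit Arguments. Unset Strict Implicit. Unset Printing Implicit Defensive.

Definition bs (l : nat -> bool) (w : nat) : bool :=
  \big[addb/false]_(k < w.+1) (odd 'C(w, k) && l k).
Definition Dl (H : nat -> bool) : nat -> bool := fun x => H x (+) H x.+1.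

Lemma pascal (phi : nat -> bool) m :
  \big[addb/false]_(k < m.+2) (odd 'C(m.+1, k) && phi k)
  = bs phi m (+) bs (fun k => phi k.+1) m.
Proof.
rewrite big_ord_recl bin0 /=.
under eq_bigr => i _ do rewrite /bump /= binS oddD andb_addl.
rewrite big_split /= addbA; congr (addb _ _).
rewrite /bs big_ord_recl bin0 /=; congr (addb _ _).
rewrite big_ord_recr /= bin_small // andFb addbF.
by apply: eq_bigr => i _.
Qed.

Lemma bsD l : Dl (bs l) = bs (fun k => l k.+1).
Proof.
apply: functional_extensionality => x; rewrite /Dl.
have -> : bs l x.+1 = bs l x (+) bs (fun k => l k.+1) x by rewrite -pascal.
by rewrite addbA addbb.
Qed.

Lemma DD_bs m l : iter m Dl (bs l) = bs (fun k => l (k + m)).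
Proof.
elim: m => [|m IH] /=.
  by congr bs; apply: functional_extensionality => k; rewrite addn0.
rewrite IH bsD; congr bs; apply: functional_extensionality => k.
by rewrite addSnnS.
Qed.

Lemma bs0 l : bs l 0 = l 0.
Proof. by rewrite /bs big_ord_recl big_ord0 bin0 /= addbF. Qed.

Lemma DD_eval m H x :
  iter m Dl H x = \big[addb/false]_(k < m.+1) (odd 'C(m, k) && H (x + k)).
Proof.
elim: m H x => [|m IH] H x.
  by rewrite big_ord_recl big_ord0 bin0 /= addn0 addbF.
rewrite iterSr IH.
have -> : \big[addb/false]_(k < m.+2) (odd 'C(m.+1, k) && H (x + k))
  = bs (fun k => H (x + k)) m (+) bs (fun k => H (x + k.+1)) m
  by rewrite (pascal (fun k => H (x + k))).
rewrite /bs -big_split /=; apply: eq_bigr => i _.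
by rewrite /Dl -andb_addr addnS.
Qed.

Lemma bs_eval m H : bs H m = iter m Dl H 0.
Proof. by rewrite DD_eval; apply: eq_bigr => i _; rewrite add0n. Qed.

Lemma bs_inv l m : bs (bs l) m = l m.
Proof. by rewrite bs_eval DD_bs bs0 add0n. Qed.

Lemma DD_pow t H x : iter (2 ^ t) Dl H x = H x (+) H (x + 2 ^ t).
Proof.
elim: t H x => [|t IH] H x; first by rewrite expn0 /= /Dl addn1.
rewrite expnS mul2n -addnn iterD IH !IH.
by rewrite -addnA addbA -(addbA (H x)) addbb addbF.
Qed.

Lemma iter_Dl_false j : iter j Dl (fun _ => false) = (fun _ => false).
Proof.
elim: j => //= j ->; exact: functional_extensionality.
Qed.

Lemma periodic_vanish t H :
  (forall x, H (x + 2 ^ t) = H x) -> forall m, 2 ^ t <= m -> bs H m = false.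
Proof.
move=> Hp m le; rewrite bs_eval -(subnK le) iterD.
have -> : iter (2 ^ t) Dl H = (fun _ => false).
  by apply: functional_extensionality => x; rewrite DD_pow Hp addbb.
by rewrite iter_Dl_false.
Qed.

Lemma bs_xor P Q m : bs (fun k => P k (+) Q k) m = bs P m (+) bs Q m.
Proof. by rewrite /bs -big_split; apply: eq_bigr => i _; rewrite andb_addr. Qed.

Lemma bs_false m : bs (fun _ => false) m = false.
Proof. by rewrite /bs big1 // => i _; rewrite andbF. Qed.

Lemma bs_true m : bs (fun _ => true) m = (m == 0).
Proof.
have -> : (fun _ : nat => true) = bs (fun k => k == 0).
  apply: functional_extensionality => w.
  rewrite /bs big_ord_recl bin0 /= big1 // => i _; by rewrite andbF.
by rewrite bs_inv.
Qed.

Section Main.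
Variables (l : nat -> bool) (d t r : nat).
Hypotheses (hd : d = 2 ^ t + r) (hr : r < 2 ^ t)
  (hl : forall k, d < k -> l k = false).

Definition Fw := bs l.
Definition Aw := bs (fun k => l (k + 2 ^ t)).
Definition Gw := fun w => ~~ Aw w.
Definition Hw := fun w => Gw w && Fw w.

Lemma F_shift w : Fw (w + 2 ^ t) = Fw w (+) Aw w.
Proof.
have := DD_pow t Fw w; rewrite /Fw DD_bs -/Aw => ->.
by rewrite addbA addbb.
Qed.

Lemma A_per w : Aw (w + 2 ^ t) = Aw w.
Proof.
have := DD_pow t Aw w; rewrite /Aw DD_bs.
have -> : (fun k => l (k + 2 ^ t + 2 ^ t)) = (fun _ => false).
  apply: functional_extensionality => k; apply: hl.
  by rewrite hd [X in _ < X]addnC ltn_add2l (leq_trans hr) // leq_addl.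
by rewrite bs_false; case: (bs _ w); case: (bs _ (w + _)).
Qed.

Lemma H_vanish m : 2 ^ t <= m -> bs Hw m = false.
Proof.
apply: periodic_vanish => x.
by rewrite /Hw /Gw F_shift A_per; case: (Aw x); case: (Fw x).
Qed.

Lemma G_coef m : bs Gw m = (m == 0) (+) l (m + 2 ^ t).
Proof.
have -> : Gw = (fun w => true (+) Aw w) by [].
by rewrite bs_xor bs_true /Aw bs_inv.
Qed.
End Main.

Lemma wt_le n (x : point n) : wt x <= n.
Proof. by rewrite /wt (leq_trans (max_card _)) // card_ord. Qed.

Lemma covered_wt n (x u : point n) : covered x u -> wt x <= wt u.
Proof.
move=> /forallP cov; apply: subset_leq_card; apply/subsetP => i.
by rewrite !inE => xi; have := cov i; rewrite xi.
Qed.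

Definition phi n (x : point n) : {set 'I_n} := [set i | x i].

Lemma phi_inj n : injective (@phi n).
Proof.
move=> x y /setP E; apply/ffunP => i; have := E i; by rewrite !inE.
Qed.

Lemma phi_of n (A : {set 'I_n}) : phi [ffun i => i \in A] = A.
Proof. by apply/setP => i; rewrite !inE ffunE. Qed.

Lemma exists_wt n m : m <= n -> exists x : point n, wt x = m.
Proof.
move=> le.
have : 0 < #|[set A : {set 'I_n} | #|A| == m]| by rewrite card_draws card_ord bin_gt0.
case/card_gt0P => A; rewrite inE => /eqP cA.
by exists [ffun i => i \in A]; rewrite /wt -/(phi _) phi_of.
Qed.

Lemma iter_addb c b : iter c (addb b) false = odd c && b.
Proof. by elim: c => //= c ->; case: b; rewrite ?andbT ?andbF. Qed.

Lemma count_cov n (u : point n) k :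
  #|[set x : point n | covered x u & wt x == k]| = 'C(wt u, k).
Proof.
rewrite -(card_imset _ (@phi_inj n)) /wt -/(phi u) -cards_draws.
apply: eq_card => A; rewrite [in RHS]inE; apply/imsetP/andP.
  case=> x; rewrite inE => /andP[/forallP cov /eqP wk] ->; split => //.
    apply/subsetP => i; rewrite !inE => xi; have := cov i; by rewrite xi.
  by rewrite -wk.
case=> sub /eqP cA; exists [ffun i => i \in A]; last by rewrite phi_of.
rewrite inE; apply/andP; split.
  apply/forallP => i; rewrite ffunE; apply/implyP => iA.
  by have := subsetP sub i iA; rewrite inE.
by rewrite /wt -/(phi _) phi_of cA.
Qed.

Lemma bridge n (h : BF n) H : (forall x, h x = H (wt x)) ->
  forall u, anf h u = bs H (wt u).
Proof.
move=> hH u; rewrite /anf.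
under eq_bigr => x _ do rewrite hH.
rewrite (partition_big (fun x => (inord (wt x) : 'I_(wt u).+1)) predT) //.
rewrite /bs; apply: eq_bigr => k _.
rewrite (eq_bigl (fun x => x \in [set x : point n | covered x u & wt x == k])); last first.
  move=> x; rewrite inE; case cov: (covered x u) => //=.
  by rewrite -(inj_eq val_inj) /= inordK // ltnS covered_wt.
rewrite (eq_bigr (fun _ => H k)); last first.
  by move=> x; rewrite inE => /andP[_ /eqP ->].
by rewrite big_const count_cov iter_addb.
Qed.

Lemma deg_le n (h : BF n) K : (forall u, anf h u -> wt u <= K) -> deg h <= K.
Proof. by move=> H; apply/bigmax_leqP. Qed.

Lemma deg_ge n (h : BF n) u : anf h u -> wt u <= deg h.
Proof. by move=> H; apply: (leq_bigmax_cond u). Qed.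

Lemma bigmin_le (I : finType) (P : pred I) (F : I -> nat) x i0 :
  P i0 -> \big[minn/x]_(i | P i) F i <= F i0.
Proof.
move=> Pi0; rewrite -big_filter.
have : i0 \in [seq i <- index_enum I | P i] by rewrite mem_filter Pi0 mem_index_enum.
elim: [seq i <- index_enum I | P i] => //= a s IH; rewrite inE big_cons.
case/predU1P => [<-|/IH h]; first exact: geq_minl.
exact: leq_trans (geq_minr _ _) h.
Qed.

Theorem corollary6 (n : nat) (f : BF n) :
  symmetricBF f -> 1 < deg f -> ~ (exists k : nat, deg f = 2 ^ k) ->
  FAI f <= deg f - 1.
Proof.
move=> sym d1 npow; set d := deg f in d1 npow *.
pose pt w := odflt [ffun => false] [pick x : point n | wt x == w].
have ptw w : w <= n -> wt (pt w) = w.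
  move=> le; rewrite /pt; case: pickP => [x /eqP //|none].
  by have [x hx] := exists_wt le; have := none x; rewrite hx eqxx.
pose F0 w := f (pt w).
have fF0 x : f x = F0 (wt x) by apply: sym; rewrite ptw // wt_le.
pose l k := (k <= n) && bs F0 k.
have fF x : f x = bs l (wt x).
  rewrite fF0 -[LHS]bs_inv /bs; apply: eq_bigr => i _; congr andb.
  by rewrite /l (leq_trans _ (wt_le x)) // -ltnS.
have anff u : anf f u = l (wt u) by rewrite (bridge fF) bs_inv.
have dn : d <= n by apply: deg_le => u _; apply: wt_le.
have hl k : d < k -> l k = false.
  move=> dk; case: (leqP k n) => kn; last by rewrite /l leqNgt kn.
  have [u wu] := exists_wt kn; case E: (l k) => //.
  have := deg_ge (h := f) (u := u); rewrite anff wu E => /(_ isT).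
  by rewrite -/d leqNgt dk.
have ld : l d = true.
  case E: (l d) => //; exfalso.
  have : d <= d.-1.
    apply: deg_le => u; rewrite anff => lu.
    have wd : wt u <= d by apply: deg_ge; rewrite anff.
    suff : wt u < d.-1.+1 by [].
    rewrite (ltn_predK d1) ltn_neqAle wd andbT.
    by apply/eqP => wE; rewrite wE E in lu.
  by case: d d1 {npow dn hl E} => // d' _; rewrite ltnn.
set t := trunc_log 2 d.
have ht1 : 2 ^ t <= d by apply: trunc_logP => //; apply: ltn_trans d1.
have ht2 : d < 2 ^ t.+1 by apply: trunc_log_ltn.
set r := d - 2 ^ t.
have hd : d = 2 ^ t + r by rewrite subnKC.
have r0 : 0 < r.
  rewrite /r subn_gt0 ltn_neqAle ht1 andbT; apply/negP => /eqP E.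
  by apply: npow; exists t.
have hr : r < 2 ^ t by rewrite -(ltn_add2l (2 ^ t)) -hd addnn -mul2n -expnS.
pose g : BF n := [ffun x => Gw l t (wt x)].
have anfg u : anf g u = (wt u == 0) (+) l (wt u + 2 ^ t).
  by rewrite (bridge (H := Gw l t)) => [|x]; rewrite ?G_coef ?ffunE.
have dg1 : deg g <= r.
  apply: deg_le => u; rewrite anfg; case: eqP => [-> //|_] /= lu.
  rewrite -(leq_add2r (2 ^ t)) [r + _]addnC -hd leqNgt; apply/negP => /hl.
  by rewrite lu.
have dg2 : r <= deg g.
  have [u wu] := exists_wt (leq_trans (leq_subr _ _) dn : r <= n).
  rewrite -wu; apply: deg_ge; rewrite anfg wu.
  by rewrite (negbTE (lt0n_neq0 r0)) addnC -hd ld.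
have dgf : deg (bmul g f) <= 2 ^ t - 1.
  apply: deg_le => u.
  rewrite (bridge (H := Hw l t)) => [|x]; last by rewrite /bmul !ffunE fF.
  case: (leqP (2 ^ t) (wt u)) => [le|lt]; first by rewrite (H_vanish hd hr hl).
  by rewrite subn1 -ltnS prednK ?expn_gt0.
have hdm1 : d - 1 = r + (2 ^ t - 1) by rewrite hd addnBA ?expn_gt0 // addnC.
rewrite /FAI; case: (leqP (AI f) r) => hAI.
  apply: leq_trans (geq_minl _ _) _; rewrite hdm1 mul2n -addnn.
  apply: leq_add => //; rewrite subn1 -ltnS prednK ?expn_gt0 //.
  exact: leq_ltn_trans hAI hr.
apply: leq_trans (geq_minr _ _) _.
apply: leq_trans (bigmin_le _ _ (i0 := g) _) _.
  by rewrite (leq_trans r0 dg2) (leq_ltn_trans dg1 hAI).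
rewrite hdm1.
exact: leq_add.
Qed.
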